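(* Let $S$ be a right non-degenerate semigroup of skew type. Then $S$ satisfies the ascending chain condition on right ideals.
   Context: A semigroup of skew type is a monoid $S$ with a monoid presentation $S=\langle x_1,\ldots,x_n \mid x_ix_j=x_kx_l\rangle$ consisting of $\binom{n}{2}$ relations, each of the form $x_ix_j=x_kx_l$ with $i\neq j$, $k\neq l$, such that every word $x_px_q$ with $p\neq q$ appears (as one side) in exactly one of the relations; $X=\{x_1,\ldots,x_n\}$. For $a,b\in X$, the partner of $ab$ is the other side of the unique defining relation containing $ab$ if $a\neq b$, and $ab$ itself if $a=b$. $S$ is right non-degenerate if for every $x\in X$ the map $X\to X$ sending $y$ to the first letter of the partner of $xy$ is surjective. *)

(* Defs.v *)
From mathcomp Require Import all_boot.
From Stdlib Require Import Relations.Relation_Operators.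
Set Implicit Arguments. Unset Strict Implicit. Unset Printing Implicit Defensive.

(* Generators x_1..x_n are represented by 'I_n; words of the free monoid on X
   by seq 'I_n.  The defining relations are encoded by a function
   r : 'I_n -> 'I_n -> 'I_n * 'I_n : for i != j, the relation containing the
   word x_i x_j is  x_i x_j = x_k x_l  with (k,l) = r i j.  Values on the
   diagonal are irrelevant. *)

Definition rel_data (n : nat) := 'I_n -> 'I_n -> 'I_n * 'I_n.

(* Skew type: the relations form a set of unordered pairs {x_ix_j, x_kx_l}
   of distinct words with i<>j, k<>l, such that every word x_px_q (p<>q)
   lies in exactly one relation. *)
Definition skew_type (n : nat) (r : rel_data n) : Prop :=
  forall i j : 'I_n, i != j ->
    [/\ (r i j).1 != (r i j).2, r i j != (i, j) & r (r i j).1 (r i j).2 = (i, j)].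

Definition partner (n : nat) (r : rel_data n) (a b : 'I_n) : 'I_n * 'I_n :=
  if a == b then (a, a) else r a b.

Definition right_nondegenerate (n : nat) (r : rel_data n) : Prop :=
  forall x : 'I_n, forall z : 'I_n, exists y : 'I_n, (partner r x y).1 = z.

Inductive rstep (n : nat) (r : rel_data n) : seq 'I_n -> seq 'I_n -> Prop :=
| RStep (u v : seq 'I_n) (i j : 'I_n) : i != j ->
    rstep r (u ++ [:: i; j] ++ v) (u ++ [:: (r i j).1; (r i j).2] ++ v).

(* the congruence on the free monoid generated by the relations; S is the
   quotient of seq 'I_n by this congruence *)
Definition sequiv (n : nat) (r : rel_data n) : seq 'I_n -> seq 'I_n -> Prop :=
  clos_refl_sym_trans (seq 'I_n) (@rstep n r).

(* subsets of S, represented as congruence-saturated predicates on words *)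
Definition saturated (n : nat) (r : rel_data n) (I : seq 'I_n -> Prop) : Prop :=
  forall w w', sequiv r w w' -> I w -> I w'.

Definition right_ideal (n : nat) (r : rel_data n) (I : seq 'I_n -> Prop) : Prop :=
  saturated r I /\ forall w s, I w -> I (w ++ s).

Definition acc_right_ideals (n : nat) (r : rel_data n) : Prop :=
  forall I : nat -> seq 'I_n -> Prop,
    (forall k, right_ideal r (I k)) ->
    (forall k w, I k w -> I k.+1 w) ->
    exists N, forall m, N <= m -> forall w, I m w <-> I N w.

(* Main.v *)
Require Import Defs.
From Stdlib Require Import Classical ClassicalEpsilon.
From mathcomp Require Import all_boot.
From Stdlib Require Import Relations.Relation_Operators.
Set Implicit Arguments. Unset Strict Implicit. Unset Printing Implicit Defensive.

Section S.
Variables (n : nat) (r : rel_data n).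
Notation word := (seq 'I_n).
Notation seqv := (sequiv r).

Lemma sq_refl w : seqv w w. Proof. exact: rst_refl. Qed.
Lemma sq_sym a b : seqv a b -> seqv b a. Proof. exact: rst_sym. Qed.
Lemma sq_trans a b c : seqv a b -> seqv b c -> seqv a c. Proof. exact: rst_trans. Qed.

Lemma sq_catr a b t : seqv a b -> seqv (a ++ t) (b ++ t).
Proof.
elim=> [x y [u v i j hij]| x | x y _ IH | x y z _ IH1 _ IH2].
- apply: rst_step; rewrite -!catA; exact: (RStep r u (v ++ t) hij).
- exact: sq_refl.
- exact: sq_sym.
- exact: sq_trans IH1 IH2.
Qed.

Lemma sq_cons x a b : seqv a b -> seqv (x :: a) (x :: b).
Proof.
elim=> [a' b' [u v i j hij]| a' | a' b' _ IH | a' b' c' _ IH1 _ IH2].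
- apply: rst_step; exact: (RStep r (x :: u) v hij).
- exact: sq_refl.
- exact: sq_sym.
- exact: sq_trans IH1 IH2.
Qed.

Lemma sq_catl p a b : seqv a b -> seqv (p ++ a) (p ++ b).
Proof. by elim: p => //= x p IH /IH; apply: sq_cons. Qed.

Definition sg (x y : 'I_n) := (partner r x y).1.
Fixpoint sgw (t : word) (c : 'I_n) : 'I_n :=
  if t is x :: t' then sg x (sgw t' c) else c.

Lemma sgw_cat t t' c : sgw (t ++ t') c = sgw t (sgw t' c).
Proof. by elim: t => //= x t ->. Qed.

Lemma sq_pair x d e : seqv [:: x, d & e] [:: (partner r x d).1, (partner r x d).2 & e].
Proof.
rewrite /partner; case: eqP => [->|/eqP hne]; first exact: sq_refl.
apply: rst_step; exact: (RStep r [::] e hne).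
Qed.

Lemma keyF t c : exists e, seqv (t ++ [:: c]) (sgw t c :: e).
Proof.
elim: t => [|x t [e IH]] /=; first by exists [::]; apply: sq_refl.
exists ((partner r x (sgw t c)).2 :: e).
apply: sq_trans (sq_cons x IH) _; exact: sq_pair.
Qed.

Definition le (u w : word) := exists t, seqv (u ++ t) w.
Lemma le_refl u : le u u. Proof. by exists [::]; rewrite cats0; apply: sq_refl. Qed.
Lemma le_trans a b c : le a b -> le b c -> le a c.
Proof.
move=> [t H1] [t' H2]; exists (t ++ t'); rewrite catA.
exact: sq_trans (sq_catr t' H1) H2.
Qed.
Lemma le_rcons v x : le v (rcons v x).
Proof. by exists [:: x]; rewrite cats1; apply: sq_refl. Qed.

Hypothesis rnd : right_nondegenerate r.

Lemma sg_inj x : injective (sg x).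
Proof.
have H : #|image (sg x) 'I_n| == #|'I_n|.
  rewrite (@eq_cardT _ (mem (image (sg x) 'I_n))) -?cardT //.
  move=> y; rewrite !inE; have [z Hz] := rnd x y.
  by rewrite -Hz /sg; apply: image_f.
move/image_injP: H => inj a b e; exact: inj.
Qed.

Lemma sgw_inj t : injective (sgw t).
Proof. by elim: t => //= x t IH a b /sg_inj /IH. Qed.


Lemma min_ex (P : nat -> Prop) m : P m -> exists m, P m /\ forall k, P k -> m <= k.
Proof.
elim/ltn_ind: m => m IH Pm.
case: (classic (exists k, k < m /\ P k)) => [[k [km Pk]]|H]; first exact: IH km Pk.
exists m; split=> // k Pk; rewrite leqNgt; apply/negP=> km; apply: H; by exists k.
Qed.

Definition bad (f : nat -> word) := forall i j, i < j -> ~ le (f i) (f j).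
Definition Q (h : nat -> word) k f := bad f /\ (forall i, i < k -> f i = h i).

Lemma cm' h k : exists f, bad h ->
  Q h k f /\ forall f', Q h k f' -> size (f k) <= size (f' k).
Proof.
case: (classic (bad h)) => [hb|nb]; last by exists h.
have [m [[f [Qf Ef]] Hm]] := @min_ex (fun m => exists f, Q h k f /\ size (f k) = m)
   (size (h k)) (ex_intro _ h (conj (conj hb (fun _ _ => erefl)) erefl)).
exists f => _; split=> // f' Qf'; rewrite Ef; apply: Hm; by exists f'.
Qed.

Definition step h k := proj1_sig (constructive_indefinite_description _ (cm' h k)).
Lemma stepP h k : bad h ->
  Q h k (step h k) /\ forall f', Q h k f' -> size (step h k k) <= size (f' k).
Proof. exact: (proj2_sig (constructive_indefinite_description _ (cm' h k))). Qed.

Section MB.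
Variables (f0 : nat -> word) (b0 : bad f0).

Fixpoint G k : nat -> word :=
  step (if k is k'.+1 then G k' else f0) k.

Lemma G_bad k : bad (G k).
Proof.
elim: k => [|k IH] /=; first by case: (@stepP _ 0 b0) => [[]].
by case: (@stepP _ (k.+1) IH) => [[]].
Qed.

Lemma G_agree k i : i <= k -> G k i = G i i.
Proof.
elim: k => [|k IH]; first by rewrite leqn0 => /eqP ->.
rewrite leq_eqVlt => /orP [/eqP -> //|ik].
have [[_ A] _] := @stepP _ (k.+1) (@G_bad k).
by rewrite /= A // IH.
Qed.

Definition g i := G i i.

Lemma g_bad : bad g.
Proof.
move=> i j ij; rewrite /g -(G_agree (ltnW ij)); exact: G_bad.
Qed.

Lemma g_min k f' : bad f' -> (forall i, i < k -> f' i = g i) -> size (g k) <= size (f' k).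
Proof.
case: k => [|k] bf' A.
  by have [_ H] := @stepP _ 0 b0; apply: H; split.
have [_ H] := @stepP _ (k.+1) (@G_bad k); apply: H; split=> // i ik.
by rewrite A // /g G_agree.
Qed.
End MB.

Lemma pigeon (T : finType) (f : nat -> T) : exists a b, a < b /\ f a = f b.
Proof.
apply: NNPP => H.
have inj : injective (fun i : 'I_(#|T|.+1) => f i).
  move=> i j E; apply: val_inj => /=; case: (ltngtP i j) => // ij; exfalso; apply: H.
    by exists i, j.
  by exists j, i.
by have := leq_card _ inj; rewrite card_ord ltnn.
Qed.

Fixpoint Tr (T : nat -> word) a k := if k is k'.+1 then Tr T a k' ++ T (a + k') else [::].

Lemma Tr_add T a k : Tr T 0 (a + k) = Tr T 0 a ++ Tr T a k.
Proof.
elim: k => [|k IH]; first by rewrite addn0 cats0.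
by rewrite addnS /= IH add0n catA.
Qed.

Theorem wqo (f : nat -> word) : exists i j, i < j /\ le (f i) (f j).
Proof.
apply: NNPP => nf.
have b0 : bad f by move=> i j ij H; apply: nf; exists i, j.
have gb : bad (g f) := g_bad b0.
have gne k : g f k != [::].
  apply/eqP => E; apply: (gb k k.+1 (ltnSn k)); rewrite E; exists (g f k.+1); exact: sq_refl.
case E0: (g f 0) => [|x0 s0]; first by move: (gne 0); rewrite E0.
pose v k := belast (head x0 (g f k)) (behead (g f k)).
pose c k := last x0 (g f k).
have gvc k : g f k = rcons (v k) (c k).
  move: (gne k); rewrite /v /c; case: (g f k) => [|y s] //= _; exact: lastI.
have vsz k : size (v k) < size (g f k) by rewrite [g f k]gvc size_rcons.
have vle k : le (v k) (g f k) by rewrite [g f k]gvc; apply: le_rcons.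
have P (psi : nat -> nat) : (forall i, psi i < psi i.+1) ->
    exists i j, i < j /\ le (v (psi i)) (v (psi j)).
  move=> inc; apply: NNPP => nP.
  have mono : {homo psi : i j / i < j} := homo_ltn ltn_trans inc.
  have mono0 j : psi 0 <= psi j by case: j => // j; apply/ltnW/mono.
  pose f' i := if i < psi 0 then g f i else v (psi (i - psi 0)).
  have bf' : bad f'.
    move=> i j ij; rewrite /f'.
    case: ifP => hi; case: ifP => hj.
    - exact: gb.
    - move=> H; apply: (gb i (psi (j - psi 0))); first exact: leq_trans hi (mono0 _).
      exact: le_trans H (vle _).
    - by have := ltn_trans ij hj; rewrite hi.
    - move=> H; apply: nP; exists (i - psi 0), (j - psi 0); split=> //.
      move/negbT: hi; move/negbT: hj; rewrite -!leqNgt => hj hi.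
      by rewrite ltn_sub2r // (leq_ltn_trans hi ij).
  have := g_min b0 (k:=psi 0) bf' (fun i ip => ltac:(by rewrite /f' ip)).
  by rewrite /f' ltnn subnn leqNgt vsz.
have [c0 Hc0] : exists c0, forall N, exists k, N <= k /\ c k = c0.
  apply: NNPP => H.
  have H' : forall c0, exists N, forall k, N <= k -> c k != c0.
    move=> c0; apply: NNPP => H2; apply: H; exists c0 => N; apply: NNPP => H3.
    apply: H2; exists N => k Nk; apply/eqP => E; apply: H3; exists k; by split.
  pose Nf c0 := proj1_sig (constructive_indefinite_description _ (H' c0)).
  pose M := \max_(c0 : 'I_n) Nf c0.
  have := proj2_sig (constructive_indefinite_description _ (H' (c M))) M.
  by move=> /(_ (@leq_bigmax _ Nf (c M))); rewrite eqxx.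
pose pk N := proj1_sig (constructive_indefinite_description _ (Hc0 N)).
have pkP N : N <= pk N /\ c (pk N) = c0 :=
  proj2_sig (constructive_indefinite_description _ (Hc0 N)).
pose e i := iter i (fun k => pk k.+1) (pk 0).
have e_inc i : e i < e i.+1 by exact: (pkP _).1.
have e_mono : {homo e : i j / i < j} := homo_ltn ltn_trans e_inc.
have e_c i : c (e i) = c0 by case: i => [|i]; exact: (pkP _).2.
pose h i := v (e i).
have [N HN] : exists N, forall i, N <= i -> exists j, i < j /\ le (h i) (h j).
  apply: NNPP => H.
  have H' : forall N, exists i, N <= i /\ forall j, i < j -> ~ le (h i) (h j).
    move=> N; apply: NNPP => H2; apply: H; exists N => i Ni; apply: NNPP => H3.
    apply: H2; exists i; split=> // j ij Hle; apply: H3; by exists j.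
  pose tf N := proj1_sig (constructive_indefinite_description _ (H' N)).
  have tfP N : N <= tf N /\ forall j, tf N < j -> ~ le (h (tf N)) (h j) :=
    proj2_sig (constructive_indefinite_description _ (H' N)).
  pose phi i := iter i (fun k => tf k.+1) (tf 0).
  have phi_inc i : phi i < phi i.+1 by exact: (tfP _).1.
  have phi_mono : {homo phi : i j / i < j} := homo_ltn ltn_trans phi_inc.
  have phiT i : forall j, phi i < j -> ~ le (h (phi i)) (h j).
    by case: i => [|i]; exact: (tfP _).2.
  have [i [j [ij Hle]]] := P (fun i => e (phi i)) (fun i => e_mono _ _ (phi_inc i)).
  exact: (phiT i (phi j) (phi_mono _ _ ij) Hle).
have HN' : forall i, exists j, N <= i -> i < j /\ le (h i) (h j).
  move=> i; case: (leqP N i) => Ni; first by have [j Hj] := HN i Ni; exists j.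
  by exists 0.
pose nx i := proj1_sig (constructive_indefinite_description _ (HN' i)).
have nxP i : N <= i -> i < nx i /\ le (h i) (h (nx i)) :=
  proj2_sig (constructive_indefinite_description _ (HN' i)).
pose J l := iter l nx N.
have JN l : N <= J l.
  elim: l => [|l IH] //=; exact: ltnW (leq_ltn_trans IH (nxP _ IH).1).
have Jstep l : J l < J l.+1 /\ le (h (J l)) (h (J l.+1)) := nxP _ (JN l).
have J_mono : {homo J : i j / i < j} := homo_ltn ltn_trans (fun l => (Jstep l).1).
pose T l := proj1_sig (constructive_indefinite_description _ (Jstep l).2).
have TP l : seqv (h (J l) ++ T l) (h (J l.+1)) :=
  proj2_sig (constructive_indefinite_description _ (Jstep l).2).
have chain a k : seqv (h (J a) ++ Tr T a k) (h (J (a + k))).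
  elim: k => [|k IH]; first by rewrite addn0 cats0; exact: sq_refl.
  rewrite addnS /= catA; exact: sq_trans (sq_catr _ IH) (TP _).
have [a [b [ab Eab]]] := pigeon (fun l => [ffun y => sgw (Tr T 0 l) y]).
have Eb : b = a + (b - a) by rewrite subnKC // ltnW.
have Hfix : sgw (Tr T a (b - a)) c0 = c0.
  apply: (@sgw_inj (Tr T 0 a)); move/ffunP: Eab => /(_ c0); rewrite !ffunE.
  have -> : Tr T 0 b = Tr T 0 a ++ Tr T a (b - a) by rewrite {1}Eb Tr_add.
  by rewrite sgw_cat => ->.
have [e' He'] := keyF (Tr T a (b - a)) c0; rewrite Hfix in He'.
apply: (gb (e (J a)) (e (J b))); first exact/e_mono/J_mono.
exists e'; rewrite !gvc !e_c -!/(h _) -cats1 -catA /=.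
apply: sq_trans (sq_catl _ (sq_sym He')) _.
rewrite catA -!cats1; apply: sq_catr; have -> : h (J b) = h (J (a + (b - a))) by rewrite -Eb.
exact: chain.
Qed.

End S.

Theorem proposition4p2 (n : nat) (r : rel_data n) :
  skew_type r -> right_nondegenerate r -> acc_right_ideals r.
Proof.
move=> _ rnd I Iid Imono.
apply: NNPP => H.
have Imon k k' w : k <= k' -> I k w -> I k' w.
  move=> kk'; rewrite -(subnKC kk'); elim: (k' - k) => [|d IH]; rewrite ?addn0 // addnS.
  by move/IH/Imono.
have H' : forall N, exists p : nat * seq 'I_n, N <= p.1 /\ I p.1 p.2 /\ ~ I N p.2.
  move=> N; apply: NNPP => H2; apply: H; exists N => m Nm w; split; last exact: Imon.
  move=> Imw; apply: NNPP => nI; apply: H2; by exists (m, w).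
pose ch N := proj1_sig (constructive_indefinite_description _ (H' N)).
have chP N : N <= (ch N).1 /\ I (ch N).1 (ch N).2 /\ ~ I N (ch N).2 :=
  proj2_sig (constructive_indefinite_description _ (H' N)).
pose M k := iter k (fun N => (ch N).1) 0.
pose w k := (ch (M k)).2.
have Mle i j : i <= j -> M i <= M j.
  move=> ij; rewrite -(subnKC ij); elim: (j - i) => [|d IH]; rewrite ?addn0 // addnS.
  exact: leq_trans IH (chP _).1.
have [i [j [ij [t Hle]]]] := wqo rnd w.
have wi : I (M i.+1) (w i) := (chP _).2.1.
have wj : ~ I (M j) (w j) := (chP _).2.2.
apply: wj; apply: ((Iid (M j)).1 _ _ Hle); apply: (Iid (M j)).2; exact: Imon (Mle _ _ ij) wi.
Qed.
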